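(* For every substitution $\sigma$ and every freshness context $\nabla$: $\sigma$ respects $\nabla$ if and only if $\nabla\sigma\neq\bot$.
   Context: Nominal terms. Atoms $a,b,c,\dots$ and variables $X,Y,\dots$ are sorted; a permutation $\pi$ is a finite sequence of swappings $(a\,b)$ of same-sorted atoms, with inverse $\pi^{-1}$ the reversed sequence; nominal terms are $t::=f(t_1,\dots,t_n)\mid a\mid a.t\mid \pi\cdot X$, and $\pi\bullet t$ denotes the action of permutations on terms ($(a\,b)$ swaps $a$ and $b$ everywhere, including bound positions, and $(a\,b)\bullet(\pi\cdot X)=((a\,b)\pi)\cdot X$; sequences act right to left). A freshness context is a finite set of constraints $a\# X$. A substitution maps variables to terms of the same sort; $t\sigma$ is its application, which allows atom capture (e.g. $(a.X)\{X\mapsto a\}=a.a$) and satisfies $(\pi\cdot X)\sigma=\pi\bullet(X\sigma)$. $\mathrm{FA^{-s}}(t)$ is the set of atoms free in $t$ ignoring suspensions: $\mathrm{FA^{-s}}(f(t_1,\dots,t_n))=\bigcup_i\mathrm{FA^{-s}}(t_i)$, $\mathrm{FA^{-s}}(a)=\{a\}$, $\mathrm{FA^{-s}}(a.t)=\mathrm{FA^{-s}}(t)\setminus\{a\}$, $\mathrm{FA^{-s}}(\pi\cdot X)=\emptyset$. $\sigma$ respects $\nabla$ if for every variable $X$, $\mathrm{FA^{-s}}(X\sigma)\cap\{a\mid a\# X\in\nabla\}=\emptyset$. The algorithm ${\sf FC}$ on a finite set $F$ of formulas $a\# t$: starting from $F;\emptyset$, apply as long as possible: $\{a\# b\}\uplus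 F';\Delta\Rightarrow F';\Delta$ if $a\neq b$; $\{a\# a.t\}\uplus F';\Delta\Rightarrow F';\Delta$; $\{a\# b.t\}\uplus F';\Delta\Rightarrow\{a\# t\}\cup F';\Delta$ if $a\neq b$; $\{a\# f(t_1,\dots,t_n)\}\uplus F';\Delta\Rightarrow \{a\# t_1,\dots,a\# t_n\}\cup F';\Delta$; $\{a\#\pi\cdot X\}\uplus F';\Delta\Rightarrow F';\{\pi^{-1}\bullet a\# X\}\cup\Delta$. The terminal state is $\emptyset;\Delta$ (then ${\sf FC}(F)=\Delta$) or contains some $a\# a$ (then ${\sf FC}(F)=\bot$). For a freshness context $\nabla$ and substitution $\sigma$, $\nabla\sigma:={\sf FC}(\{a\# X\sigma\mid a\# X\in\nabla\})$. *)

(* Defs.v *)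
From mathcomp Require Import all_boot.
Set Implicit Arguments.
Unset Strict Implicit.
Unset Printing Implicit Defensive.

Section Nominal.
(* A : atoms, V : variables, F : function symbols *)
Variables (A V : eqType) (F : Type).

(* a permutation is a finite sequence of swappings; it acts right to left *)
Definition perm := seq (A * A).

Definition swap_atom (s : A * A) (c : A) : A :=
  if c == s.1 then s.2 else if c == s.2 then s.1 else c.

Definition perm_atom (p : perm) (c : A) : A := foldr swap_atom c p.

Definition perm_inv (p : perm) : perm := rev p.

Inductive term : Type :=
| Fn of F & seq term
| At of A
| Abs of A & term
| Susp of perm & V.

Fixpoint perm_term (p : perm) (t : term) : term :=
  match t with
  | Fn f ts => Fn f (map (perm_term p) ts)
  | At a => At (perm_atom p a)
  | Abs a u => Abs (perm_atom p a) (perm_term p u)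
  | Susp q X => Susp (p ++ q) X
  end.

(* substitution application, allowing capture *)
Fixpoint subst (sigma : V -> term) (t : term) : term :=
  match t with
  | Fn f ts => Fn f (map (subst sigma) ts)
  | At a => At a
  | Abs a u => Abs a (subst sigma u)
  | Susp q X => perm_term q (sigma X)
  end.

Fixpoint fa_ns (a : A) (t : term) : bool :=
  match t with
  | Fn f ts => has (fa_ns a) ts
  | At b => a == b
  | Abs b u => (a != b) && fa_ns a u
  | Susp _ _ => false
  end.

(* freshness context: finite set of constraints a # X *)
Definition fcontext := seq (A * V).

Definition respects (sigma : V -> term) (nabla : fcontext) : Prop :=
  forall (a : A) (X : V), (a, X) \in nabla -> ~~ fa_ns a (sigma X).

(* result of FC: None = bottom, Some Delta = a freshness context *)
Definition fc_join (r1 r2 : option fcontext) : option fcontext :=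
  match r1, r2 with
  | Some d1, Some d2 => Some (d1 ++ d2)
  | _, _ => None
  end.

(* simplification of a single formula a # t by the rules of FC;
   None iff a terminal formula a # a is produced *)
Fixpoint fc1 (a : A) (t : term) : option fcontext :=
  match t with
  | At b => if a == b then None else Some [::]
  | Abs b u => if a == b then Some [::] else fc1 a u
  | Fn _ ts => foldr fc_join (Some [::]) (map (fc1 a) ts)
  | Susp p X => Some [:: (perm_atom (perm_inv p) a, X)]
  end.

Definition FC (Fs : seq (A * term)) : option fcontext :=
  foldr fc_join (Some [::]) (map (fun f => fc1 f.1 f.2) Fs).

Definition fc_subst (nabla : fcontext) (sigma : V -> term) : option fcontext :=
  FC (map (fun c => (c.1, sigma c.2)) nabla).

End Nominal.

(* Main.v *)
Require Import Defs.
From mathcomp Require Import all_boot.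

Lemma foldr_join_None (A V : eqType) (l : seq (option (fcontext A V))) :
  (foldr (@fc_join A V) (Some [::]) l == None) = has (fun o => o == None) l.
Proof.
elim: l => [|o l IH] //=.
case: o => [d|] //=; rewrite -IH.
by case: (foldr _ _ l).
Qed.

Fixpoint fc1_None (A V : eqType) (F : Type) (a : A) (t : term A V F) {struct t} :
  (fc1 a t == None) = fa_ns a t.
Proof.
case: t => [f ts|b|b u|p X] /=.
- rewrite foldr_join_None has_map.
  elim: ts => [|t ts IH] //=.
  by rewrite IH /= (fc1_None A V F a t).
- by case: (a == b).
- by case: (a == b) => //=; rewrite fc1_None.
- by [].
Qed.

Theorem lemma1 (A V : eqType) (F : Type) (sigma : V -> term A V F)
  (nabla : fcontext A V) :
  respects sigma nabla <-> fc_subst nabla sigma <> None.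
Proof.
have E : (fc_subst nabla sigma == None) =
         has (fun c => fa_ns c.1 (sigma c.2)) nabla.
  rewrite /fc_subst /FC foldr_join_None !has_map.
  apply: eq_has => c /=. exact: fc1_None.
split.
- move=> H /eqP; rewrite E => /hasP [[a X] Hin /=] Hfa.
  by move: (H a X Hin); rewrite Hfa.
- move=> H a X Hin; apply/negP => Hfa; apply: H; apply/eqP; rewrite E.
  by apply/hasP; exists (a, X).
Qed.
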